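(* Let $(X,\Gamma)$ be a $(\mu,\nu)$-path system space. For every $\delta\ge0$ and $\eta\ge0$ there exist $\theta\ge0$ and a function $\zeta\colon\mathbb R_{\ge0}\times\mathbb R_{\ge0}\to\mathbb R_{\ge0}$ with the following property. Let $\pi_A\colon X\to A$ be a $\delta$-constricting map and let $Y\subseteq X$ be $\eta$-quasi-convex. Then for all $\varepsilon_1,\varepsilon_2\ge0$, $$\operatorname{diam}_A(Y)\le \operatorname{diam}(A^{+\theta+\varepsilon_1}\cap Y^{+\varepsilon_2})+\zeta(\varepsilon_1,\varepsilon_2)\quad\text{and}\quad \operatorname{diam}(A^{+\theta+\varepsilon_1}\cap Y^{+\varepsilon_2})\le\operatorname{diam}_A(Y)+\zeta(\varepsilon_1,\varepsilon_2).$$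
   Context: A path is a rectifiable continuous map $\alpha\colon[a,b]\to X$ parametrised by arc length; it is a $(\kappa,\lambda)$-quasi-geodesic if $d(\alpha(t),\alpha(t'))\le|t-t'|\le\kappa d(\alpha(t),\alpha(t'))+\lambda$. A $(\mu,\nu)$-path system space $(X,\Gamma)$ is a geodesic metric space $X$ with a collection $\Gamma$ of paths closed under subpaths, such that any two points are joined by an element of $\Gamma$ and every element is a $(\mu,\nu)$-quasi-geodesic. $Y^{+\eta}=\{x\in X: d(x,Y)\le\eta\}$. A subset $Y$ is $\eta$-quasi-convex if every $\gamma\in\Gamma$ with endpoints in $Y$ lies in $Y^{+\eta}$. A map $\pi_A\colon X\to A$ onto a subset $A$ is $\delta$-constricting if (CS1) $d(x,\pi_A(x))\le\delta$ for $x\in A$, and (CS2) for all $x,y\in X$ and $\gamma\in\Gamma$ joining $x$ to $y$, if $d(\pi_A(x),\pi_A(y))>\delta$ then $\gamma$ meets $B_X(\pi_A(x),\delta)$ and $B_X(\pi_A(y),\delta)$. $\operatorname{diam}_A(Y)=\operatorname{diam}(\pi_A(Y))$; the diameter of the empty set is $0$. *)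

(* Defs.v *)
From Stdlib Require Import Reals List Sorted.
From Coquelicot Require Import Coquelicot.
Open Scope R_scope.

Section Defs.
Variable X : Type.
Variable d : X -> X -> R.

Definition is_metric : Prop :=
  (forall x y, 0 <= d x y) /\
  (forall x y, d x y = 0 <-> x = y) /\
  (forall x y, d x y = d y x) /\
  (forall x y z, d x z <= d x y + d y z).

Definition is_geodesic_space : Prop :=
  forall x y, exists g : R -> X,
    g 0 = x /\ g (d x y) = y /\
    (forall s t, 0 <= s <= d x y -> 0 <= t <= d x y ->
       d (g s) (g t) = Rabs (s - t)).

(** A path alpha : [a,b] -> X, represented by its endpoints and a map
    R -> X of which only the values on [a,b] matter. *)
Record path := mkPath { p_a : R; p_b : R; p_f : R -> X }.

Fixpoint chain_sum (f : R -> X) (l : list R) : R :=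
  match l with
  | x :: ((y :: _) as l') => d (f x) (f y) + chain_sum f l'
  | _ => 0
  end.

Definition is_partition (s t : R) (l : list R) : Prop :=
  l <> nil /\ hd 0 l = s /\ last l 0 = t /\ LocallySorted Rle l.

Definition arc_length (f : R -> X) (s t : R) : Rbar :=
  Lub_Rbar (fun r => exists l, is_partition s t l /\ r = chain_sum f l).

Definition continuous_on_interval (f : R -> X) (a b : R) : Prop :=
  forall t, a <= t <= b -> forall eps, 0 < eps -> exists del, 0 < del /\
    forall t', a <= t' <= b -> Rabs (t - t') < del -> d (f t) (f t') < eps.

Definition rectifiable (p : path) : Prop :=
  exists L : R, arc_length (p_f p) (p_a p) (p_b p) = Finite L.

Definition arc_length_parametrised (p : path) : Prop :=
  forall s t, p_a p <= s -> s <= t -> t <= p_b p ->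
    arc_length (p_f p) s t = Finite (t - s).

Definition is_path (p : path) : Prop :=
  p_a p <= p_b p /\ continuous_on_interval (p_f p) (p_a p) (p_b p) /\
  rectifiable p /\ arc_length_parametrised p.

Definition quasi_geodesic (kappa lambda : R) (p : path) : Prop :=
  forall t t', p_a p <= t <= p_b p -> p_a p <= t' <= p_b p ->
    d (p_f p t) (p_f p t') <= Rabs (t - t') /\
    Rabs (t - t') <= kappa * d (p_f p t) (p_f p t') + lambda.

Definition joins (p : path) (x y : X) : Prop :=
  p_f p (p_a p) = x /\ p_f p (p_b p) = y.

Definition path_system_space (mu nu : R) (Gamma : path -> Prop) : Prop :=
  is_metric /\ is_geodesic_space /\
  (forall p, Gamma p -> is_path p) /\
  (forall p s t, Gamma p -> p_a p <= s -> s <= t -> t <= p_b p ->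
      Gamma (mkPath s t (p_f p))) /\
  (forall x y, exists p, Gamma p /\ joins p x y) /\
  (forall p, Gamma p -> quasi_geodesic mu nu p).

(** Distance from a point to a set (inf, = +oo for the empty set). *)
Definition dist_set (x : X) (Y : X -> Prop) : Rbar :=
  Glb_Rbar (fun r => exists y, Y y /\ r = d x y).

Definition nbhd (Y : X -> Prop) (eta : R) : X -> Prop :=
  fun x => Rbar_le (dist_set x Y) (Finite eta).

(** Diameter, with diam(empty) = 0 (since d x x = 0 the extra 0 does not
    change the supremum of a nonempty set). *)
Definition diam (S : X -> Prop) : Rbar :=
  Lub_Rbar (fun r => r = 0 \/ exists x y, S x /\ S y /\ r = d x y).

Definition quasi_convex (Gamma : path -> Prop) (eta : R) (Y : X -> Prop) : Prop :=
  forall p, Gamma p -> Y (p_f p (p_a p)) -> Y (p_f p (p_b p)) ->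
    forall t, p_a p <= t <= p_b p -> nbhd Y eta (p_f p t).

Definition meets_ball (p : path) (c : X) (r : R) : Prop :=
  exists t, p_a p <= t <= p_b p /\ d (p_f p t) c <= r.

Definition constricting (Gamma : path -> Prop) (delta : R)
    (A : X -> Prop) (pi : X -> X) : Prop :=
  (forall x, A (pi x)) /\
  (forall x, A x -> d x (pi x) <= delta) /\
  (forall x y p, Gamma p -> joins p x y -> d (pi x) (pi y) > delta ->
     meets_ball p (pi x) delta /\ meets_ball p (pi y) delta).

Definition image (pi : X -> X) (Y : X -> Prop) : X -> Prop :=
  fun z => exists y, Y y /\ z = pi y.

Definition diam_proj (pi : X -> X) (Y : X -> Prop) : Rbar := diam (image pi Y).

Definition inter (S T : X -> Prop) : X -> Prop := fun x => S x /\ T x.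

End Defs.

(* Main.v *)
Require Import Defs.
From Stdlib Require Import Reals Lra Classical.
From Coquelicot Require Import Coquelicot.
Open Scope R_scope.

Section H.
Variable X : Type.
Variable d : X -> X -> R.

Lemma dist_le (x z : X) (Y : X -> Prop) : Y z -> Rbar_le (dist_set X d x Y) (Finite (d x z)).
Proof.
  intros Hz. unfold dist_set.
  destruct (Glb_Rbar_correct (fun r => exists y, Y y /\ r = d x y)) as [H _].
  apply H. exists z; auto.
Qed.

Lemma dist_ex (x : X) (Y : X -> Prop) r : Rbar_le (dist_set X d x Y) (Finite r) ->
  exists z, Y z /\ d x z <= r + 1.
Proof.
  intros Hle. apply NNPP; intro Hn.
  assert (Hlb : is_lb_Rbar (fun r0 => exists y, Y y /\ r0 = d x y) (Finite (r+1))).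
  { intros s [y [Hy ->]]. simpl. destruct (Rle_dec (d x y) (r+1)) as [h|h].
    - exfalso; apply Hn; exists y; auto.
    - lra. }
  destruct (Glb_Rbar_correct (fun r => exists y, Y y /\ r = d x y)) as [_ H2].
  pose proof (H2 _ Hlb) as H3. unfold dist_set in Hle.
  pose proof (Rbar_le_trans _ _ _ H3 Hle). simpl in H. lra.
Qed.

Lemma diam_ge (S : X -> Prop) x y : S x -> S y -> Rbar_le (Finite (d x y)) (diam X d S).
Proof.
  intros Hx Hy. unfold diam.
  destruct (Lub_Rbar_correct (fun r => r = 0 \/ exists x y, S x /\ S y /\ r = d x y)) as [H _].
  apply H. right. exists x, y; auto.
Qed.

Lemma diam_ge0 (S : X -> Prop) : Rbar_le (Finite 0) (diam X d S).
Proof.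
  unfold diam.
  destruct (Lub_Rbar_correct (fun r => r = 0 \/ exists x y, S x /\ S y /\ r = d x y)) as [H _].
  apply H. left; auto.
Qed.

Lemma diam_bound (S : X -> Prop) B :
  (forall x y, S x -> S y -> Rbar_le (Finite (d x y)) B) -> Rbar_le (Finite 0) B ->
  Rbar_le (diam X d S) B.
Proof.
  intros H0 H1. unfold diam.
  destruct (Lub_Rbar_correct (fun r => r = 0 \/ exists x y, S x /\ S y /\ r = d x y)) as [_ H].
  apply H. intros s [->|[x [y [Hx [Hy ->]]]]]; auto.
Qed.

Lemma plus_le (D : Rbar) a a' z : Rbar_le (Finite a) D -> a' <= a + z ->
  Rbar_le (Finite a') (Rbar_plus D (Finite z)).
Proof.
  intros H1 H2. destruct D as [m| |]; simpl in *; try lra; auto.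
Qed.
End H.

Theorem mainTheorem10 (X : Type) (d : X -> X -> R) (mu nu : R)
  (Gamma : path X -> Prop) :
  path_system_space X d mu nu Gamma ->
  forall delta eta : R, 0 <= delta -> 0 <= eta ->
  exists (theta : R) (zeta : R -> R -> R),
    0 <= theta /\
    (forall e1 e2, 0 <= e1 -> 0 <= e2 -> 0 <= zeta e1 e2) /\
    forall (A : X -> Prop) (pi : X -> X) (Y : X -> Prop),
      constricting X d Gamma delta A pi ->
      quasi_convex X d Gamma eta Y ->
      forall e1 e2 : R, 0 <= e1 -> 0 <= e2 ->
        Rbar_le (diam_proj X d pi Y)
          (Rbar_plus (diam X d (inter X (nbhd X d A (theta + e1)) (nbhd X d Y e2)))
                     (Finite (zeta e1 e2))) /\
        Rbar_le (diam X d (inter X (nbhd X d A (theta + e1)) (nbhd X d Y e2)))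
          (Rbar_plus (diam_proj X d pi Y) (Finite (zeta e1 e2))).
Proof.
  intros [[Hd0 [Hdz [Hds Hdt]]] [_ [_ [_ [Hjoin Hqg]]]]] delta eta Hdel Heta.
  set (L := fun s => 3*delta + Rabs mu * s + Rabs nu).
  set (theta := delta + eta + 1).
  set (K := fun e1 => theta + e1 + 1 + delta + L (theta + e1 + 1)).
  exists theta, (fun e1 e2 => 2 * K e1 + 2 * L (e2 + 1) + 2 * (delta + eta + 1) + delta).
  assert (HL0 : forall s, 0 <= s -> 0 <= L s).
  { intros s hs. unfold L. pose proof (Rabs_pos mu); pose proof (Rabs_pos nu).
    pose proof (Rmult_le_pos _ _ H hs). lra. }
  assert (HLm : forall s s', s <= s' -> L s <= L s').
  { intros s s' h. unfold L. pose proof (Rabs_pos mu).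
    pose proof (Rmult_le_compat_l _ _ _ H h). lra. }
  assert (Hdd : forall x, d x x = 0) by (intro x; apply Hdz; reflexivity).
  split; [unfold theta; lra|]. split.
  { intros e1 e2 h1 h2. unfold K. pose proof (HL0 (theta+e1+1)).
    pose proof (HL0 (e2+1)). unfold theta in *. lra. }
  intros A pi Y [HA [HAd Hcs]] Hqc e1 e2 h1 h2.
  assert (HLip : forall x y, d (pi x) (pi y) <= L (d x y)).
  { intros x y. destruct (Hjoin x y) as [p [Hp [Ha Hb]]].
    destruct (Rle_dec (d (pi x) (pi y)) delta) as [hle|hgt].
    - pose proof (HL0 _ (Hd0 x y)). unfold L in *. pose proof (Rabs_pos nu).
      pose proof (Rmult_le_pos _ _ (Rabs_pos mu) (Hd0 x y)). lra.
    - destruct (Hcs x y p Hp (conj Ha Hb)) as [[t [ht Ht]] [t' [ht' Ht']]]; [lra|].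
      destruct (Hqg p Hp t t' ht ht') as [q1 _].
      assert (hab : p_a X p <= p_b X p) by lra.
      destruct (Hqg p Hp (p_a X p) (p_b X p)) as [_ q2]; try lra.
      rewrite Ha, Hb in q2.
      assert (Rabs (t - t') <= Rabs (p_a X p - p_b X p)).
      { unfold Rabs; destruct (Rcase_abs (t-t')); destruct (Rcase_abs (p_a X p - p_b X p)); lra. }
      assert (mu * d x y <= Rabs mu * d x y).
      { apply Rmult_le_compat_r; [apply Hd0| apply Rle_abs]. }
      pose proof (Rle_abs nu).
      pose proof (Hdt (pi x) (p_f X p t) (pi y)).
      pose proof (Hdt (p_f X p t) (p_f X p t') (pi y)).
      pose proof (Hds (pi x) (p_f X p t)). unfold L. lra. }
  assert (HK : forall x r, 0 <= r -> Rbar_le (dist_set X d x A) (Finite r) ->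
     d x (pi x) <= r + 1 + delta + L (r + 1)).
  { intros x r hr hx. destruct (dist_ex X d x A r hx) as [a [Ha Hxa]].
    pose proof (HAd a Ha). pose proof (HLip x a). pose proof (Hds (pi a) (pi x)). pose proof (HLm _ _ Hxa).
    pose proof (Hdt x a (pi x)). pose proof (Hdt a (pi a) (pi x)).
    pose proof (Hds x a). lra. }
  assert (HK0 : forall e, 0 <= e -> 0 <= K e) .
  { intros e he. unfold K. pose proof (HL0 (theta+e+1)). unfold theta in *. lra. }
  split.
  - unfold diam_proj. apply diam_bound.
    2:{ apply (plus_le _ 0 0); [apply diam_ge0|]. pose proof (HK0 e1 h1).
        pose proof (HL0 (e2+1)). lra. }
    intros x x' [y [Hy ->]] [y' [Hy' ->]].
    destruct (Rle_dec (d (pi y) (pi y')) delta) as [hle|hgt].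
    + apply (plus_le _ 0); [apply diam_ge0|]. pose proof (HK0 e1 h1).
        pose proof (HL0 (e2+1)). lra.
    + destruct (Hjoin y y') as [p [Hp [Ha Hb]]].
      destruct (Hcs y y' p Hp (conj Ha Hb)) as [[t [ht Ht]] [t' [ht' Ht']]]; [lra|].
      rewrite <- Ha in Hy. rewrite <- Hb in Hy'.
      destruct (dist_ex X d _ Y eta (Hqc p Hp Hy Hy' t ht)) as [z [Hz Hzd]].
      destruct (dist_ex X d _ Y eta (Hqc p Hp Hy Hy' t' ht')) as [z' [Hz' Hzd']].
      rewrite Ha in Hy. rewrite Hb in Hy'.
      assert (Hzz : d (pi y) (pi y') <= d z z' + 2 * (delta + eta + 1)).
      { pose proof (Hdt (pi y) (p_f X p t) (pi y')). pose proof (Hdt (p_f X p t) z (pi y')).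
        pose proof (Hdt z z' (pi y')). pose proof (Hdt z' (p_f X p t') (pi y')).
        pose proof (Hds (pi y) (p_f X p t)). pose proof (Hds z' (p_f X p t')). lra. }
      apply (plus_le _ (d z z')).
      + apply diam_ge; split.
        * eapply Rbar_le_trans; [apply (dist_le X d z (pi y) A (HA y))|].
          simpl. pose proof (Hdt z (p_f X p t) (pi y)). pose proof (Hds z (p_f X p t)).
          unfold theta. lra.
        * eapply Rbar_le_trans; [apply (dist_le X d z z Y Hz)|]. simpl. rewrite Hdd. lra.
        * eapply Rbar_le_trans; [apply (dist_le X d z' (pi y') A (HA y'))|].
          simpl. pose proof (Hdt z' (p_f X p t') (pi y')). pose proof (Hds z' (p_f X p t')).
          unfold theta. lra.
        * eapply Rbar_le_trans; [apply (dist_le X d z' z' Y Hz')|]. simpl. rewrite Hdd. lra.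
      + pose proof (HK0 e1 h1). pose proof (HL0 (e2+1)). lra.
  - apply diam_bound.
    2:{ apply (plus_le _ 0 0); [apply diam_ge0|]. pose proof (HK0 e1 h1).
        pose proof (HL0 (e2+1)). lra. }
    intros x x' [HxA HxY] [HxA' HxY'].
    destruct (dist_ex X d x Y e2 HxY) as [y [Hy Hxy]].
    destruct (dist_ex X d x' Y e2 HxY') as [y' [Hy' Hxy']].
    apply (plus_le _ (d (pi y) (pi y'))).
    + apply diam_ge; [exists y | exists y']; auto.
    + assert (0 <= theta + e1) by (unfold theta; lra).
      pose proof (HK x _ H HxA). pose proof (HK x' _ H HxA').
      pose proof (HLip x y). pose proof (HLip x' y'). pose proof (Hds (pi x') (pi y')).
      pose proof (HLm _ _ Hxy). pose proof (HLm _ _ Hxy').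
      pose proof (Hds y' x').
      pose proof (Hdt x (pi x) x'). pose proof (Hdt (pi x) (pi y) x').
      pose proof (Hdt (pi y) (pi y') x'). pose proof (Hdt (pi y') (pi x') x').
      pose proof (Hds (pi x') x'). unfold K. lra.
Qed.
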